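(* Let $J\in\mathbb{R}^{3\times3}$ be symmetric positive definite and let $R_d\in\mathsf{SO(3)}$ be constant (so $\Omega_d\equiv0$ and $e_\Omega=\Omega$). Let $k_R,k_\Omega>0$ and define the control $$u'=-k_Re_R-k_\Omega e_\Omega,$$ which does not depend on $J$. Consider the closed-loop system $J\dot\Omega+\Omega\times J\Omega=u'$, $\dot R=R\hat\Omega$. If the initial condition satisfies $$\Psi(R(0),R_d)<2,\qquad \|\Omega(0)\|^2<\frac{2k_R}{\lambda_{\max}(J)}\big(2-\Psi(R(0),R_d)\big),$$ then $\Psi(R(t),R_d)<2$ for all $t\ge0$, and the zero equilibrium $(e_R,e_\Omega)=(0,0)$ is exponentially stable with this set contained in its region of attraction: there exist constants $C,\beta>0$ (depending on $J,k_R,k_\Omega$) such that $$\|e_R(t)\|^2+\|e_\Omega(t)\|^2\le C\big(\|e_R(0)\|^2+\|e_\Omega(0)\|^2\big)e^{-\beta t}\quad\text{for all }t\ge0.$$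
   Context: $\mathsf{SO(3)}$ is the group of $3\times3$ rotation matrices; $\hat x$ denotes the skew-symmetric matrix with $\hat x y=x\times y$, and $\vee$ is its inverse. $\Psi(R,R_d)=2-\sqrt{1+\mathrm{tr}(R_d^TR)}$, $e_R=\frac{1}{2\sqrt{1+\mathrm{tr}(R_d^TR)}}(R_d^TR-R^TR_d)^\vee$ (defined when $\Psi<2$), and $e_\Omega=\Omega-R^TR_d\Omega_d$, which equals $\Omega$ here. $\lambda_{\max}(J)$ is the largest eigenvalue of $J$. *)

(* Defs.v *)
From Stdlib Require Import Reals.
Open Scope R_scope.

(* Vectors of R^3 and 3x3 matrices, indexed by 0,1,2 (other indices unused). *)
Definition vec := nat -> R.
Definition mat := nat -> nat -> R.

Definition mv (A : mat) (x : vec) : vec :=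
  fun i => A i 0%nat * x 0%nat + A i 1%nat * x 1%nat + A i 2%nat * x 2%nat.
Definition mm (A B : mat) : mat :=
  fun i j => A i 0%nat * B 0%nat j + A i 1%nat * B 1%nat j + A i 2%nat * B 2%nat j.
Definition transp (A : mat) : mat := fun i j => A j i.
Definition msub (A B : mat) : mat := fun i j => A i j - B i j.
Definition idm : mat := fun i j => if Nat.eqb i j then 1 else 0.
Definition trace (A : mat) : R := A 0%nat 0%nat + A 1%nat 1%nat + A 2%nat 2%nat.
Definition det3 (A : mat) : R :=
  A 0%nat 0%nat * (A 1%nat 1%nat * A 2%nat 2%nat - A 1%nat 2%nat * A 2%nat 1%nat)
  - A 0%nat 1%nat * (A 1%nat 0%nat * A 2%nat 2%nat - A 1%nat 2%nat * A 2%nat 0%nat)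
  + A 0%nat 2%nat * (A 1%nat 0%nat * A 2%nat 1%nat - A 1%nat 1%nat * A 2%nat 0%nat).

Definition vadd (x y : vec) : vec := fun i => x i + y i.
Definition vsub (x y : vec) : vec := fun i => x i - y i.
Definition vscale (c : R) (x : vec) : vec := fun i => c * x i.
Definition vzero : vec := fun _ => 0.
Definition dot (x y : vec) : R := x 0%nat * y 0%nat + x 1%nat * y 1%nat + x 2%nat * y 2%nat.
Definition norm2 (x : vec) : R := dot x x.

Definition cross (x y : vec) : vec :=
  fun i => match i with
           | 0%nat => x 1%nat * y 2%nat - x 2%nat * y 1%nat
           | 1%nat => x 2%nat * y 0%nat - x 0%nat * y 2%nat
           | _ => x 0%nat * y 1%nat - x 1%nat * y 0%nat
           end.

(* hat map: hat x y = x × y *)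
Definition hat (x : vec) : mat :=
  fun i j => match i, j with
             | 0%nat, 1%nat => - x 2%nat
             | 0%nat, 2%nat => x 1%nat
             | 1%nat, 0%nat => x 2%nat
             | 1%nat, 2%nat => - x 0%nat
             | 2%nat, 0%nat => - x 1%nat
             | 2%nat, 1%nat => x 0%nat
             | _, _ => 0
             end.
(* vee map: inverse of hat on skew-symmetric matrices *)
Definition vee (M : mat) : vec :=
  fun i => match i with
           | 0%nat => M 2%nat 1%nat
           | 1%nat => M 0%nat 2%nat
           | _ => M 1%nat 0%nat
           end.

Definition mat_eq (A B : mat) : Prop := forall i j, (i < 3)%nat -> (j < 3)%nat -> A i j = B i j.
Definition vec_eq (x y : vec) : Prop := forall i, (i < 3)%nat -> x i = y i.
Definition vec_nonzero (x : vec) : Prop := exists i, (i < 3)%nat /\ x i <> 0.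

Definition in_SO3 (Rm : mat) : Prop := mat_eq (mm (transp Rm) Rm) idm /\ det3 Rm = 1.

Definition sym_pos_def (J : mat) : Prop :=
  mat_eq (transp J) J /\ forall x, vec_nonzero x -> dot x (mv J x) > 0.

Definition is_eigenvalue (J : mat) (l : R) : Prop :=
  exists x, vec_nonzero x /\ vec_eq (mv J x) (vscale l x).
Definition is_lambda_max (J : mat) (l : R) : Prop :=
  is_eigenvalue J l /\ forall m, is_eigenvalue J m -> m <= l.

Definition Psi (Rm Rd : mat) : R := 2 - sqrt (1 + trace (mm (transp Rd) Rm)).
Definition e_R (Rm Rd : mat) : vec :=
  vscale (1 / (2 * sqrt (1 + trace (mm (transp Rd) Rm))))
         (vee (msub (mm (transp Rd) Rm) (mm (transp Rm) Rd))).
Definition e_Omega (Rm Rd : mat) (Om Omd : vec) : vec :=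
  vsub Om (mv (mm (transp Rm) Rd) Omd).

(* The control u' = - kR e_R - kOm e_Omega, with Omega_d = 0 (R_d constant);
   it does not involve J. *)
Definition control (kR kOm : R) (Rm Rd : mat) (Om : vec) : vec :=
  vsub (vscale (- kR) (e_R Rm Rd)) (vscale kOm (e_Omega Rm Rd Om vzero)).

Definition cont_nonneg (f : R -> R) : Prop :=
  forall t, 0 <= t -> forall eps, eps > 0 -> exists delta, delta > 0 /\
    forall s, 0 <= s -> Rabs (s - t) < delta -> Rabs (f s - f t) < eps.

Definition closed_loop_solution (J : mat) (kR kOm : R) (Rd : mat)
    (Rt : R -> mat) (Om dOm : R -> vec) : Prop :=
  (forall i j, (i < 3)%nat -> (j < 3)%nat -> cont_nonneg (fun s => Rt s i j)) /\
  (forall i, (i < 3)%nat -> cont_nonneg (fun s => Om s i)) /\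
  (forall t, t > 0 ->
     (forall i j, (i < 3)%nat -> (j < 3)%nat ->
        derivable_pt_lim (fun s => Rt s i j) t (mm (Rt t) (hat (Om t)) i j)) /\
     (forall i, (i < 3)%nat -> derivable_pt_lim (fun s => Om s i) t (dOm t i)) /\
     vec_eq (vadd (mv J (dOm t)) (cross (Om t) (mv J (Om t))))
            (control kR kOm (Rt t) Rd (Om t))).

(* Main.v *)
Require Import Defs.
From Stdlib Require Import Reals.
Open Scope R_scope.
From Stdlib Require Import Lra Lia Psatz Classical.

Notation n0 := 0%nat.
Notation n1 := 1%nat.
Notation n2 := 2%nat.

Ltac idx1 := let i := fresh "i" in let Hi := fresh "Hi" in intros i Hi;
  destruct i as [|[|[|i]]]; [ | | | exfalso; lia].
Ltac idx2 := let i := fresh "i" in let j := fresh "j" in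
  let Hi := fresh "Hi" in let Hj := fresh "Hj" in intros i j Hi Hj;
  destruct i as [|[|[|i]]]; [ | | | exfalso; lia];
  destruct j as [|[|[|j]]]; try (exfalso; lia).

Lemma nz_of (v:vec) : ~ (v n0 = 0 /\ v n1 = 0 /\ v n2 = 0) -> vec_nonzero v.
Proof.
  intros H. destruct (Req_dec (v n0) 0) as [H0|H0].
  - destruct (Req_dec (v n1) 0) as [H1|H1].
    + destruct (Req_dec (v n2) 0) as [H2|H2].
      * exfalso; tauto.
      * exists n2; split; [lia|auto].
    + exists n1; split; [lia|auto].
  - exists n0; split; [lia|auto].
Qed.

Lemma nz_to (v:vec) : vec_nonzero v -> ~ (v n0 = 0 /\ v n1 = 0 /\ v n2 = 0).
Proof.
  intros [i [Hi Hv]] [H0 [H1 H2]].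
  destruct i as [|[|[|i]]]; try lia; auto.
Qed.

Definition row (A:mat) (i:nat) : vec := fun j => A i j.
Definition ev (l:nat) : vec := fun i => if Nat.eqb i l then 1 else 0.

Ltac kersolve v := exists v; split;
  [ apply nz_of; unfold v, cross, row, ev; simpl; intros [? [? ?]]; lra
  | idx1; unfold mv, vzero, v, cross, row, ev; simpl; lra ].

Lemma kernel (A : mat) : det3 A = 0 -> exists v, vec_nonzero v /\ vec_eq (mv A v) vzero.
Proof.
  intros Hd. unfold det3 in Hd.
  pose (c0 := cross (row A n1) (row A n2)).
  pose (c1 := cross (row A n2) (row A n0)).
  pose (c2 := cross (row A n0) (row A n1)).
  destruct (classic (c0 n0 = 0 /\ c0 n1 = 0 /\ c0 n2 = 0)) as [H0|H0];
    [| exists c0; split; [apply nz_of; auto | idx1; unfold mv, vzero, c0, cross, row; simpl; lra]].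
  destruct (classic (c1 n0 = 0 /\ c1 n1 = 0 /\ c1 n2 = 0)) as [H1|H1];
    [| exists c1; split; [apply nz_of; auto | idx1; unfold mv, vzero, c1, cross, row; simpl; lra]].
  destruct (classic (c2 n0 = 0 /\ c2 n1 = 0 /\ c2 n2 = 0)) as [H2|H2];
    [| exists c2; split; [apply nz_of; auto | idx1; unfold mv, vzero, c2, cross, row; simpl; lra]].
  unfold c0, c1, c2, cross, row in *; simpl in *.
  destruct H0 as [? [? ?]]; destruct H1 as [? [? ?]]; destruct H2 as [? [? ?]].
  destruct (Req_dec (A n0 n0) 0); [|pose (v := cross (row A n0) (ev n1)); kersolve v].
  destruct (Req_dec (A n0 n1) 0); [|pose (v := cross (row A n0) (ev n2)); kersolve v].
  destruct (Req_dec (A n0 n2) 0); [|pose (v := cross (row A n0) (ev n0)); kersolve v].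
  destruct (Req_dec (A n1 n0) 0); [|pose (v := cross (row A n1) (ev n1)); kersolve v].
  destruct (Req_dec (A n1 n1) 0); [|pose (v := cross (row A n1) (ev n2)); kersolve v].
  destruct (Req_dec (A n1 n2) 0); [|pose (v := cross (row A n1) (ev n0)); kersolve v].
  destruct (Req_dec (A n2 n0) 0); [|pose (v := cross (row A n2) (ev n1)); kersolve v].
  destruct (Req_dec (A n2 n1) 0); [|pose (v := cross (row A n2) (ev n2)); kersolve v].
  destruct (Req_dec (A n2 n2) 0); [|pose (v := cross (row A n2) (ev n0)); kersolve v].
  pose (v := ev n0). exists v; split.
  - apply nz_of; unfold v, ev; simpl; intros [? [? ?]]; lra.
  - idx1; unfold mv, vzero, v, ev; simpl; lra.
Qed.

Definition shiftm (N:mat) (l:R) : mat := fun i j => N i j - l * idm i j.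

Definition symm (N:mat) := N n0 n1 = N n1 n0 /\ N n0 n2 = N n2 n0 /\ N n1 n2 = N n2 n1.

Lemma eig_of_ker N l v : vec_eq (mv (shiftm N l) v) vzero -> vec_eq (mv N v) (vscale l v).
Proof.
  intros H i Hi. specialize (H i Hi). unfold mv, shiftm, vzero, vscale, idm in *.
  destruct i as [|[|[|i]]]; simpl in *; try lia; lra.
Qed.

Lemma sqrt_ge_abs x y : 0 <= y -> x*x <= y -> Rabs x <= sqrt y.
Proof.
  intros Hy Hxy. rewrite <- sqrt_Rsqr_abs. apply sqrt_le_1_alt. unfold Rsqr. lra.
Qed.

Lemma quadpsd al ga b p0 p1 : 0 <= al -> 0 <= ga -> al*ga = b*b ->
  0 <= al*(p1*p1) - 2*b*p0*p1 + ga*(p0*p0).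
Proof.
  intros H1 H2 H3.
  destruct (Req_dec al 0) as [Z|Z].
  - subst al. assert (b = 0) by nra. subst b. nra.
  - assert (0 <= al*(al*(p1*p1) - 2*b*p0*p1 + ga*(p0*p0))).
    { replace (al*(al*(p1*p1) - 2*b*p0*p1 + ga*(p0*p0)))
        with ((al*p1 - b*p0)*(al*p1 - b*p0) + (al*ga - b*b)*(p0*p0)) by ring.
      rewrite H3. replace (b*b-b*b) with 0 by ring. pose proof (Rle_0_sqr (al*p1 - b*p0)). unfold Rsqr in *. lra. }
    apply (Rmult_le_reg_l al); lra.
Qed.

Lemma L3 (N:mat) : symm N -> N n0 n0 < 0 ->
  exists mu v, mu < 0 /\ vec_nonzero v /\ vec_eq (mv N v) (vscale mu v).
Proof.
  intros [S01 [S02 S12]] Ha.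
  set (a := N n0 n0) in *. set (b := N n0 n1) in *. set (c := N n1 n1).
  set (p0 := N n0 n2) in *. set (p1 := N n1 n2) in *. set (d := N n2 n2).
  set (r := sqrt ((a-c)*(a-c) + 4*(b*b))).
  assert (Hr0 : 0 <= (a-c)*(a-c) + 4*(b*b)) by (pose proof (Rle_0_sqr (a-c)); pose proof (Rle_0_sqr b); unfold Rsqr in *; lra).
  assert (Hr2 : r * r = (a-c)*(a-c) + 4*(b*b)) by (apply sqrt_sqrt; auto).
  assert (Hrabs : Rabs (a-c) <= r) by (apply sqrt_ge_abs; nra).
  assert (Hr1 : c - a <= r /\ a - c <= r).
  { split; [ rewrite Rabs_minus_sym in Hrabs|]; pose proof (Rle_abs (c-a)); pose proof (Rle_abs (a-c)); lra. }
  set (nu := (a + c - r)/2).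
  assert (Hal : 0 <= a - nu) by (unfold nu; lra).
  assert (Hga : 0 <= c - nu) by (unfold nu; lra).
  assert (Hprod : (a - nu)*(c - nu) = b*b).
  { unfold nu. replace ((a - (a + c - r) / 2) * (c - (a + c - r) / 2)) with ((r*r - (a-c)*(a-c))/4) by field.
    rewrite Hr2. field. }
  assert (Hnu : nu < 0) by (unfold nu; lra).
  set (f := fun l => det3 (shiftm N l)).
  assert (Hfnu : f nu <= 0).
  { assert (E : f nu = - ((a-nu)*(p1*p1) - 2*b*p0*p1 + (c-nu)*(p0*p0))
                     + (d - nu)*((a-nu)*(c-nu) - b*b)).
    { unfold f, det3, shiftm, idm. simpl. rewrite <- S01, <- S02, <- S12. fold a b c p0 p1 d. ring. }
    rewrite E, Hprod.
    assert (0 <= (a-nu)*(p1*p1) - 2*b*p0*p1 + (c-nu)*(p0*p0)) by (apply quadpsd; auto).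
    lra. }
  destruct (Req_dec (f nu) 0) as [Z|Z].
  - destruct (kernel _ Z) as [v [Hv Hk]]. exists nu, v. repeat split; auto.
    apply eig_of_ker; auto.
  -
    set (T := a + c + d).
    set (S := a*c - b*b + a*d - p0*p0 + c*d - p1*p1).
    set (D := det3 N).
    assert (Hf : forall l, f l = - (l*l*l) + T*(l*l) - S*l + D).
    { intros l. unfold f, D, T, S, det3, shiftm, idm; simpl.
      rewrite <- S01, <- S02, <- S12. fold a b c p0 p1 d. ring. }
    set (K := 1 + Rabs T + Rabs S + Rabs D + Rabs nu).
    assert (HK1 : 1 <= K) by (unfold K; pose proof (Rabs_pos T); pose proof (Rabs_pos S); pose proof (Rabs_pos D); pose proof (Rabs_pos nu); lra).
    assert (HKnu : - K < nu) by (unfold K; pose proof (Rabs_pos T); pose proof (Rabs_pos S); pose proof (Rabs_pos D); pose proof (Rabs_pos nu); pose proof (Rle_abs (-nu)); rewrite Rabs_Ropp in *; lra).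
    assert (HfK : 0 < f (- K)).
    { rewrite Hf.
      assert (KK : 0 <= K*K) by (apply Rle_0_sqr).
      assert (A1 : - (Rabs T) * (K*K) <= T * (K*K)).
      { apply Rmult_le_compat_r; auto. pose proof (Rle_abs (-T)); rewrite Rabs_Ropp in *. lra. }
      assert (A2 : - (Rabs S) * (K*K) <= S * K).
      { assert (- (Rabs S) * (K*K) <= - (Rabs S) * K).
        { rewrite !Ropp_mult_distr_l_reverse. apply Ropp_le_contravar.
          apply Rmult_le_compat_l; [apply Rabs_pos|]. 
          replace K with (K*1) at 1 by ring. apply Rmult_le_compat_l; lra. }
        assert (- (Rabs S) * K <= S * K).
        { apply Rmult_le_compat_r; [lra|]. pose proof (Rle_abs (-S)); rewrite Rabs_Ropp in *. lra. }
        lra. }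
      assert (A3 : - (Rabs D) * (K*K) <= D).
      { assert (1 <= K*K) by (replace 1 with (1*1) by ring; apply Rmult_le_compat; lra).
        assert (- (Rabs D) * (K*K) <= - (Rabs D)).
        { rewrite Ropp_mult_distr_l_reverse. apply Ropp_le_contravar.
          replace (Rabs D) with (Rabs D * 1) at 1 by ring.
          apply Rmult_le_compat_l; [apply Rabs_pos|lra]. }
        pose proof (Rle_abs (-D)); rewrite Rabs_Ropp in *. lra. }
      assert (A4 : K*K*(K - Rabs T - Rabs S - Rabs D) >= K*K).
      { assert (K - Rabs T - Rabs S - Rabs D >= 1) by (unfold K at 1; pose proof (Rabs_pos nu); lra).
        apply Rle_ge. replace (K*K) with (K*K*1) at 1 by ring. apply Rmult_le_compat_l; lra. }
      assert (A5 : 0 < K*K) by nra.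
      assert (E : - (- K * - K * - K) + T * (- K * - K) - S * - K + D = K*K*K + T*(K*K) + S*K + D) by ring.
      rewrite E. lra. }
    assert (Hc : continuity (fun l => - f l)).
    { assert (E: (fun l => - f l) = (fun l => l*l*l - T*(l*l) + S*l - D)).
      { apply FunctionalExtensionality.functional_extensionality. intros; rewrite Hf; ring. }
      rewrite E. reg. }
    destruct (IVT (fun l => - f l) (-K) nu Hc HKnu) as [z [Hz Hfz]]; [lra|lra|].
    assert (Hz0 : f z = 0) by lra.
    destruct (kernel _ Hz0) as [v [Hv Hk]]. exists z, v. repeat split; auto; [lra|].
    apply eig_of_ker; auto.
Qed.

Lemma mv_ext_mat A B x i : (forall j, (j<3)%nat -> A i j = B i j) -> mv A x i = mv B x i.
Proof. intros H. unfold mv. rewrite !H by lia. reflexivity. Qed.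

Lemma mv_ext_vec A x y i : vec_eq x y -> mv A x i = mv A y i.
Proof. intros H. unfold mv. rewrite !H by lia. reflexivity. Qed.

Lemma mv_idm z i : (i<3)%nat -> mv idm z i = z i.
Proof. intros Hi. unfold mv, idm. destruct i as [|[|[|i]]]; simpl; try lia; ring. Qed.

Lemma norm2_pos_of x : dot x x <> 0 -> 0 < norm2 x.
Proof. unfold norm2, dot. intros H. 
  destruct (Req_dec (x n0) 0); destruct (Req_dec (x n1) 0); destruct (Req_dec (x n2) 0);
  try (exfalso; apply H; nra); nra.
Qed.

Lemma L2 (N:mat) : symm N ->
  (forall mu v, vec_nonzero v -> vec_eq (mv N v) (vscale mu v) -> 0 <= mu) ->
  forall x, 0 <= dot x (mv N x).
Proof.
  intros HS Hev x. destruct (Rle_or_lt 0 (dot x (mv N x))) as [|Hneg]; auto. exfalso.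
  destruct HS as [S01 [S02 S12]].
  assert (Hn2 : 0 < norm2 x).
  { apply norm2_pos_of. intros Z. unfold dot in Z.
    assert (x n0 = 0 /\ x n1 = 0 /\ x n2 = 0) as [Z0 [Z1 Z2]] by (repeat split; nra).
    unfold dot, mv in Hneg. rewrite Z0, Z1, Z2 in Hneg. lra. }
  set (n := sqrt (norm2 x)).
  assert (Hn : 0 < n) by (apply sqrt_lt_R0; auto).
  assert (Hnn : n * n = norm2 x) by (apply sqrt_sqrt; lra).
  set (sg := if Rle_dec 0 (x n0) then 1 else -1).
  assert (Hsg : sg * sg = 1) by (unfold sg; destruct (Rle_dec 0 (x n0)); ring).
  assert (Hsg0 : 0 <= sg * x n0) by (unfold sg; destruct (Rle_dec 0 (x n0)); lra).
  set (y := vscale (sg / n) x).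
  assert (Hy1 : norm2 y = 1).
  { unfold y, norm2, dot, vscale. unfold norm2, dot in Hnn.
    replace (sg / n * x n0 * (sg / n * x n0) + sg / n * x n1 * (sg / n * x n1) + sg / n * x n2 * (sg / n * x n2))
      with ((sg*sg) * (x n0 * x n0 + x n1 * x n1 + x n2 * x n2) / (n*n)) by (field; lra).
    rewrite Hsg, <- Hnn. field. lra. }
  assert (Hy0 : 0 <= y n0).
  { unfold y, vscale. replace (sg / n * x n0) with ((sg * x n0) / n) by (field; lra).
    apply Rmult_le_pos; auto. left; apply Rinv_0_lt_compat; auto. }
  assert (Hyneg : dot y (mv N y) < 0).
  { replace (dot y (mv N y)) with ((sg*sg)/(n*n) * dot x (mv N x))
      by (unfold y, dot, mv, vscale; field; lra).
    rewrite Hsg. assert (0 < 1/(n*n)) by (apply Rdiv_lt_0_compat; nra). nra. }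
  set (u := fun i => y i + ev n0 i).
  set (uu := norm2 u).
  assert (Huu : uu = 2 * (1 + y n0)).
  { unfold uu, u, norm2, dot, ev; simpl. unfold norm2, dot in Hy1. lra. }
  assert (Huu0 : 0 < uu) by lra.
  set (H := fun i j => idm i j - 2 * u i * u j / uu).
  assert (HH : mat_eq (mm H H) idm).
  { idx2; unfold mm, H, idm; simpl;
    unfold uu, norm2, dot in *; field; lra. }
  assert (Hc0 : H n0 n0 = - y n0) by (unfold H, u, idm, ev; simpl; rewrite Huu; field; lra).
  assert (Hc1 : H n1 n0 = - y n1) by (unfold H, u, idm, ev; simpl; rewrite Huu; field; lra).
  assert (Hc2 : H n2 n0 = - y n2) by (unfold H, u, idm, ev; simpl; rewrite Huu; field; lra).
  assert (Hr1 : H n0 n1 = - y n1) by (rewrite <- Hc1; unfold H, idm; simpl; field; lra).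
  assert (Hr2 : H n0 n2 = - y n2) by (rewrite <- Hc2; unfold H, idm; simpl; field; lra).
  set (Np := mm H (mm N H)).
  assert (HSp : symm Np).
  { unfold symm, Np, mm, H. unfold idm; simpl. rewrite <- S01, <- S02, <- S12. repeat split; field; lra. }
  assert (Hp00 : Np n0 n0 < 0).
  { replace (Np n0 n0) with (dot y (mv N y)); auto.
    unfold Np, mm. rewrite Hc0, Hc1, Hc2, Hr1, Hr2. unfold dot, mv. ring. }
  destruct (L3 Np HSp Hp00) as [mu [v [Hmu [Hv Hev']]]].
  set (w := mv H v).
  assert (Key : forall i, (i<3)%nat -> mv N w i = mv H (mv Np v) i).
  { intros i Hi.
    assert (E : mv H (mv Np v) i = mv (mm H H) (mv (mm N H) v) i) by (unfold mv, Np, mm; ring).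
    rewrite E. rewrite (mv_ext_mat (mm H H) idm) by (intros; apply HH; auto).
    rewrite mv_idm by auto. unfold w, mv, mm. ring. }
  assert (Hw : vec_nonzero w).
  { apply nz_of. intros [W0 [W1 W2]]. apply nz_to in Hv. apply Hv.
    assert (E : forall i, (i<3)%nat -> v i = mv H w i).
    { intros i Hi. unfold w. rewrite <- (mv_idm v i Hi).
      replace (mv H (mv H v) i) with (mv (mm H H) v i) by (unfold mv, mm; ring).
      apply mv_ext_mat. intros; symmetry; apply HH; auto. }
    rewrite !E by lia. unfold mv. rewrite W0, W1, W2. repeat split; ring. }
  assert (Heig : vec_eq (mv N w) (vscale mu w)).
  { intros i Hi. rewrite Key by auto. rewrite (mv_ext_vec _ _ _ _ Hev').
    unfold w, mv, vscale. ring. }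
  pose proof (Hev mu w Hw Heig). lra.
Qed.

Lemma det_of_ker A v : vec_nonzero v -> vec_eq (mv A v) vzero -> det3 A = 0.
Proof.
  intros Hv Hk. apply nz_to in Hv.
  pose (c0 := cross (row A n1) (row A n2)).
  pose (c1 := cross (row A n2) (row A n0)).
  pose (c2 := cross (row A n0) (row A n1)).
  assert (E : forall k, det3 A * v k = c0 k * mv A v n0 + c1 k * mv A v n1 + c2 k * mv A v n2
     \/ (k >= 3)%nat).
  { intros k. destruct k as [|[|[|k]]]; [left..|right; lia];
    unfold c0, c1, c2, cross, row, mv, det3; simpl; ring. }
  rewrite !Hk in E by lia. unfold vzero in E.
  destruct (E n0) as [E0|]; [|lia]. destruct (E n1) as [E1|]; [|lia]. destruct (E n2) as [E2|]; [|lia].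
  rewrite !Rmult_0_r, !Rplus_0_r in E0, E1, E2.
  destruct (Req_dec (det3 A) 0) as [|Z]; auto. exfalso. apply Hv.
  repeat split; [apply (Rmult_eq_reg_l (det3 A))|apply (Rmult_eq_reg_l (det3 A))|apply (Rmult_eq_reg_l (det3 A))];
  try rewrite Rmult_0_r; auto.
Qed.

Lemma symJ J : sym_pos_def J -> symm J.
Proof.
  intros [HT _]. unfold symm. repeat split; symmetry; apply (HT _ _); lia.
Qed.

Lemma eig_pos J l : sym_pos_def J -> is_eigenvalue J l -> 0 < l.
Proof.
  intros [_ HP] [v [Hv He]]. specialize (HP v Hv).
  assert (E : dot v (mv J v) = l * norm2 v).
  { unfold norm2, dot. rewrite !He by lia. unfold vscale. ring. }
  assert (0 < norm2 v).
  { apply norm2_pos_of. intros Z. apply nz_to in Hv. apply Hv. unfold dot in Z.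
    repeat split; nra. }
  rewrite E in HP. nra.
Qed.

Lemma lmax_pos J l : sym_pos_def J -> is_lambda_max J l -> 0 < l.
Proof. intros H [He _]. eapply eig_pos; eauto. Qed.

Lemma J_upper J l : sym_pos_def J -> is_lambda_max J l ->
  forall x, dot x (mv J x) <= l * norm2 x.
Proof.
  intros HJ [_ Hmax] x.
  pose (N := fun i j => l * idm i j - J i j).
  assert (HS : symm N).
  { destruct (symJ J HJ) as [A [B C]]. unfold symm, N, idm; simpl. rewrite A, B, C. repeat split; ring. }
  assert (Hev : forall mu v, vec_nonzero v -> vec_eq (mv N v) (vscale mu v) -> 0 <= mu).
  { intros mu v Hv Hnv.
    assert (is_eigenvalue J (l - mu)).
    { exists v. split; auto. intros i Hi. specialize (Hnv i Hi).
      unfold mv, N, vscale, idm in *. destruct i as [|[|[|i]]]; simpl in *; try lia; lra. }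
    specialize (Hmax _ H). lra. }
  pose proof (L2 N HS Hev x) as P.
  replace (dot x (mv N x)) with (l * norm2 x - dot x (mv J x)) in P
    by (unfold N, norm2, dot, mv, idm; simpl; ring).
  lra.
Qed.

Lemma J_lower J : sym_pos_def J -> exists m, 0 < m /\ forall x, m * norm2 x <= dot x (mv J x).
Proof.
  intros HJ.
  set (T := J n0 n0 + J n1 n1 + J n2 n2).
  set (S := J n0 n0 * J n1 n1 - J n0 n1 * J n1 n0 + J n0 n0 * J n2 n2 - J n0 n2 * J n2 n0
            + J n1 n1 * J n2 n2 - J n1 n2 * J n2 n1).
  set (D := det3 J).
  assert (HD : D <> 0).
  { intros Z. destruct (kernel J Z) as [v [Hv Hk]].
    destruct HJ as [_ HP]. specialize (HP v Hv).
    assert (dot v (mv J v) = 0) by (unfold dot; rewrite !Hk by lia; unfold vzero; ring). lra. }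
  assert (HDp : 0 < Rabs D) by (apply Rabs_pos_lt; auto).
  set (m := Rmin 1 (Rabs D / (1 + Rabs T + Rabs S))).
  assert (Hm : 0 < m).
  { unfold m. apply Rmin_pos; [lra|]. apply Rdiv_lt_0_compat; auto.
    pose proof (Rabs_pos T); pose proof (Rabs_pos S); lra. }
  assert (Heig : forall l, is_eigenvalue J l -> m <= l).
  { intros l Hl. pose proof (eig_pos J l HJ Hl) as Hlp.
    destruct Hl as [v [Hv He]].
    assert (Hd : det3 (shiftm J l) = 0).
    { apply (det_of_ker _ v Hv). intros i Hi. specialize (He i Hi).
      unfold mv, shiftm, vzero, vscale, idm in *. destruct i as [|[|[|i]]]; simpl in *; try lia; lra. }
    assert (Hc : det3 (shiftm J l) = - (l*l*l) + T*(l*l) - S*l + D)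
      by (unfold det3, shiftm, idm, T, S, D, det3; simpl; ring).
    destruct (Rle_or_lt 1 l) as [L1|L1].
    - unfold m. pose proof (Rmin_l 1 (Rabs D / (1 + Rabs T + Rabs S))). lra.
    - assert (ED : D = l * (l*l - T*l + S)) by lra.
      assert (B : Rabs (l*l - T*l + S) <= 1 + Rabs T + Rabs S).
      { eapply Rle_trans. apply Rabs_triang. 
        assert (Rabs (l*l - T*l) <= 1 + Rabs T).
        { unfold Rminus. eapply Rle_trans. apply Rabs_triang.
          rewrite Rabs_Ropp, !Rabs_mult, (Rabs_right l) by lra.
          assert (l*l <= 1) by nra. pose proof (Rabs_pos T).
          assert (Rabs T * l <= Rabs T) by nra. lra. }
        lra. }
      assert (B2 : Rabs D <= l * (1 + Rabs T + Rabs S)).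
      { rewrite ED, Rabs_mult, (Rabs_right l) by lra. apply Rmult_le_compat_l; lra. }
      unfold m. eapply Rle_trans. apply Rmin_r.
      assert (0 < 1 + Rabs T + Rabs S) by (pose proof (Rabs_pos T); pose proof (Rabs_pos S); lra).
      apply (Rmult_le_reg_r (1 + Rabs T + Rabs S)); auto.
      unfold Rdiv. rewrite Rmult_assoc, Rinv_l by lra. lra. }
  exists m. split; auto. intros x.
  pose (N := fun i j => J i j - m * idm i j).
  assert (HS : symm N).
  { destruct (symJ J HJ) as [A [B C]]. unfold symm, N, idm; simpl. rewrite A, B, C. repeat split; ring. }
  assert (Hev : forall mu v, vec_nonzero v -> vec_eq (mv N v) (vscale mu v) -> 0 <= mu).
  { intros mu v Hv Hnv.
    assert (is_eigenvalue J (mu + m)).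
    { exists v. split; auto. intros i Hi. specialize (Hnv i Hi).
      unfold mv, N, vscale, idm in *. destruct i as [|[|[|i]]]; simpl in *; try lia; lra. }
    specialize (Heig _ H). lra. }
  pose proof (L2 N HS Hev x) as P.
  replace (dot x (mv N x)) with (dot x (mv J x) - m * norm2 x) in P
    by (unfold N, norm2, dot, mv, idm; simpl; ring).
  lra.
Qed.

Lemma sq0 x : 0 <= x*x.
Proof. apply Rle_0_sqr. Qed.

Lemma sq_zero x : x*x <= 0 -> x = 0.
Proof. intros H. apply Rsqr_0_uniq. pose proof (sq0 x). unfold Rsqr. lra. Qed.

Lemma mm_idm_r A P i j : mat_eq P idm -> (j < 3)%nat -> mm A P i j = A i j.
Proof.
  intros HP Hj. unfold mm. rewrite !HP by lia. unfold idm.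
  destruct j as [|[|[|j]]]; simpl; try lia; ring.
Qed.

Lemma orth_lr Q : mat_eq (mm (transp Q) Q) idm -> mat_eq (mm Q (transp Q)) idm.
Proof.
  intros HG.
  set (P := mm Q (transp Q)). set (G := mm (transp Q) Q) in HG.
  assert (E : (P n0 n0 - 1)*(P n0 n0 - 1) + (P n1 n1 - 1)*(P n1 n1 - 1) + (P n2 n2 - 1)*(P n2 n2 - 1)
     + P n0 n1 * P n0 n1 + P n0 n2 * P n0 n2 + P n1 n0 * P n1 n0 + P n1 n2 * P n1 n2
     + P n2 n0 * P n2 n0 + P n2 n1 * P n2 n1
     = G n0 n0 * G n0 n0 + G n1 n1 * G n1 n1 + G n2 n2 * G n2 n2
     + G n0 n1 * G n0 n1 + G n0 n2 * G n0 n2 + G n1 n0 * G n1 n0 + G n1 n2 * G n1 n2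
     + G n2 n0 * G n2 n0 + G n2 n1 * G n2 n1 - 2 * (G n0 n0 + G n1 n1 + G n2 n2) + 3)
    by (unfold P, G, mm, transp; ring).
  rewrite !HG in E by lia. unfold idm in E; simpl in E.
  pose proof (sq0 (P n0 n0 - 1)); pose proof (sq0 (P n1 n1 - 1)); pose proof (sq0 (P n2 n2 - 1));
  pose proof (sq0 (P n0 n1)); pose proof (sq0 (P n0 n2)); pose proof (sq0 (P n1 n0));
  pose proof (sq0 (P n1 n2)); pose proof (sq0 (P n2 n0)); pose proof (sq0 (P n2 n1)).
  idx2; unfold idm; simpl;
  first [apply sq_zero; lra | apply Rminus_diag_uniq; apply sq_zero; lra].
Qed.

Definition adjm (Q:mat) : mat := fun i j => match j with
  | O => cross (row Q n1) (row Q n2) i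
  | S O => cross (row Q n2) (row Q n0) i
  | _ => cross (row Q n0) (row Q n1) i end.

Lemma cof Q : in_SO3 Q -> mat_eq (adjm Q) (transp Q).
Proof.
  intros [HO Hd]. pose proof (orth_lr Q HO) as HP.
  assert (E : mat_eq (mm (adjm Q) (mm Q (transp Q))) (fun i j => det3 Q * Q j i))
    by (idx2; unfold adjm, mm, transp, cross, row, det3; simpl; ring).
  intros i j Hi Hj. rewrite <- (mm_idm_r (adjm Q) _ i j HP Hj).
  rewrite E by auto. rewrite Hd. unfold transp; ring.
Qed.

Lemma so3_scalar Q : in_SO3 Q ->
  (Q n0 n0 * Q n0 n0 + Q n1 n0 * Q n1 n0 + Q n2 n0 * Q n2 n0 = 1)
  /\ (Q n0 n0 * Q n0 n1 + Q n1 n0 * Q n1 n1 + Q n2 n0 * Q n2 n1 = 0)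
  /\ (Q n0 n0 * Q n0 n2 + Q n1 n0 * Q n1 n2 + Q n2 n0 * Q n2 n2 = 0)
  /\ (Q n0 n1 * Q n0 n1 + Q n1 n1 * Q n1 n1 + Q n2 n1 * Q n2 n1 = 1)
  /\ (Q n0 n1 * Q n0 n2 + Q n1 n1 * Q n1 n2 + Q n2 n1 * Q n2 n2 = 0)
  /\ (Q n0 n2 * Q n0 n2 + Q n1 n2 * Q n1 n2 + Q n2 n2 * Q n2 n2 = 1)
  /\ (Q n0 n0 * Q n0 n0 + Q n0 n1 * Q n0 n1 + Q n0 n2 * Q n0 n2 = 1)
  /\ (Q n0 n0 * Q n1 n0 + Q n0 n1 * Q n1 n1 + Q n0 n2 * Q n1 n2 = 0)
  /\ (Q n0 n0 * Q n2 n0 + Q n0 n1 * Q n2 n1 + Q n0 n2 * Q n2 n2 = 0)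
  /\ (Q n1 n0 * Q n1 n0 + Q n1 n1 * Q n1 n1 + Q n1 n2 * Q n1 n2 = 1)
  /\ (Q n1 n0 * Q n2 n0 + Q n1 n1 * Q n2 n1 + Q n1 n2 * Q n2 n2 = 0)
  /\ (Q n2 n0 * Q n2 n0 + Q n2 n1 * Q n2 n1 + Q n2 n2 * Q n2 n2 = 1)
  /\ (Q n0 n0 = Q n1 n1 * Q n2 n2 - Q n1 n2 * Q n2 n1)
  /\ (Q n0 n1 = Q n1 n2 * Q n2 n0 - Q n1 n0 * Q n2 n2)
  /\ (Q n0 n2 = Q n1 n0 * Q n2 n1 - Q n1 n1 * Q n2 n0)
  /\ (Q n1 n0 = Q n2 n1 * Q n0 n2 - Q n2 n2 * Q n0 n1)
  /\ (Q n1 n1 = Q n2 n2 * Q n0 n0 - Q n2 n0 * Q n0 n2)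
  /\ (Q n1 n2 = Q n2 n0 * Q n0 n1 - Q n2 n1 * Q n0 n0)
  /\ (Q n2 n0 = Q n0 n1 * Q n1 n2 - Q n0 n2 * Q n1 n1)
  /\ (Q n2 n1 = Q n0 n2 * Q n1 n0 - Q n0 n0 * Q n1 n2)
  /\ (Q n2 n2 = Q n0 n0 * Q n1 n1 - Q n0 n1 * Q n1 n0).
Proof.
  intros HS. pose proof HS as [HO Hd]. pose proof (orth_lr Q HO) as HP. pose proof (cof Q HS) as HC.
  pose proof (HC n0 n0 ltac:(lia) ltac:(lia)).
  pose proof (HC n0 n1 ltac:(lia) ltac:(lia)).
  pose proof (HC n0 n2 ltac:(lia) ltac:(lia)).
  pose proof (HC n1 n0 ltac:(lia) ltac:(lia)).
  pose proof (HC n1 n1 ltac:(lia) ltac:(lia)).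
  pose proof (HC n1 n2 ltac:(lia) ltac:(lia)).
  pose proof (HC n2 n0 ltac:(lia) ltac:(lia)).
  pose proof (HC n2 n1 ltac:(lia) ltac:(lia)).
  pose proof (HC n2 n2 ltac:(lia) ltac:(lia)).
  pose proof (HO n0 n0 ltac:(lia) ltac:(lia)).
  pose proof (HO n0 n1 ltac:(lia) ltac:(lia)).
  pose proof (HO n0 n2 ltac:(lia) ltac:(lia)).
  pose proof (HO n1 n0 ltac:(lia) ltac:(lia)).
  pose proof (HO n1 n1 ltac:(lia) ltac:(lia)).
  pose proof (HO n1 n2 ltac:(lia) ltac:(lia)).
  pose proof (HO n2 n0 ltac:(lia) ltac:(lia)).
  pose proof (HO n2 n1 ltac:(lia) ltac:(lia)).
  pose proof (HO n2 n2 ltac:(lia) ltac:(lia)).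
  pose proof (HP n0 n0 ltac:(lia) ltac:(lia)).
  pose proof (HP n0 n1 ltac:(lia) ltac:(lia)).
  pose proof (HP n0 n2 ltac:(lia) ltac:(lia)).
  pose proof (HP n1 n0 ltac:(lia) ltac:(lia)).
  pose proof (HP n1 n1 ltac:(lia) ltac:(lia)).
  pose proof (HP n1 n2 ltac:(lia) ltac:(lia)).
  pose proof (HP n2 n0 ltac:(lia) ltac:(lia)).
  pose proof (HP n2 n1 ltac:(lia) ltac:(lia)).
  pose proof (HP n2 n2 ltac:(lia) ltac:(lia)).
  clear HC HO HP HS.
  unfold mm, transp, idm, adjm, cross, row in *; simpl in *.
  repeat split; lra.
Qed.

Ltac so3 Q HS := let H := fresh "S3" in pose proof (so3_scalar Q HS) as H; decompose [and] H; clear H.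

Definition wv (Q:mat) : vec := vee (msub Q (transp Q)).

Lemma wnorm Q : in_SO3 Q -> norm2 (wv Q) = (3 - trace Q)*(1 + trace Q).
Proof. intros HS. so3 Q HS. unfold norm2, dot, wv, vee, msub, transp, trace; simpl. lra. Qed.

Lemma sq_le1 x : x*x <= 1 -> x <= 1.
Proof. intros H. destruct (Rle_or_lt x 1); auto. nra. Qed.

Lemma tr_le3 Q : in_SO3 Q -> trace Q <= 3.
Proof.
  intros HS. so3 Q HS. unfold trace.
  assert (Q n0 n0 <= 1) by (apply sq_le1; pose proof (sq0 (Q n1 n0)); pose proof (sq0 (Q n2 n0)); lra).
  assert (Q n1 n1 <= 1) by (apply sq_le1; pose proof (sq0 (Q n0 n1)); pose proof (sq0 (Q n2 n1)); lra).
  assert (Q n2 n2 <= 1) by (apply sq_le1; pose proof (sq0 (Q n0 n2)); pose proof (sq0 (Q n1 n2)); lra).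
  lra.
Qed.

Lemma norm2_nonneg x : 0 <= norm2 x.
Proof. unfold norm2, dot. pose proof (sq0 (x n0)); pose proof (sq0 (x n1)); pose proof (sq0 (x n2)); lra. Qed.

Lemma tr_ge Q : in_SO3 Q -> -1 <= trace Q.
Proof.
  intros HS. pose proof (wnorm Q HS). pose proof (norm2_nonneg (wv Q)). pose proof (tr_le3 Q HS).
  destruct (Req_dec (trace Q) 3); [lra|].
  destruct (Rle_or_lt (-1) (trace Q)); auto.
  assert (0 < (3 - trace Q) * (-(1 + trace Q))) by (apply Rmult_lt_0_compat; lra). lra.
Qed.

Lemma Kent Q : in_SO3 Q -> forall i j, (i<3)%nat -> (j<3)%nat ->
  wv Q i * wv Q j = (1 + trace Q) * ((1 - trace Q)*idm i j + 2 * Q i j - hat (wv Q) i j).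
Proof. intros HS. so3 Q HS. idx2; unfold wv, vee, msub, transp, trace, idm, hat; simpl; lra. Qed.

Lemma wOm Q Om : trace (mm Q (hat Om)) = - dot (wv Q) Om.
Proof. unfold trace, mm, hat, dot, wv, vee, msub, transp; simpl. ring. Qed.

Definition edotv (Q:mat) (Om:vec) (s:R) : vec := fun i =>
  wv (mm Q (hat Om)) i / (2*s) - wv Q i * (trace (mm Q (hat Om)) / (2*s)) / (2*(s*s)).

Lemma enorm Q s : in_SO3 Q -> 0 < s -> s*s = 1 + trace Q ->
  norm2 (vscale (1/(2*s)) (wv Q)) = (2 - s)*(2 + s)/4.
Proof.
  intros HS Hs Hss.
  replace (norm2 (vscale (1/(2*s)) (wv Q))) with (norm2 (wv Q) / (4*(s*s)))
    by (unfold norm2, dot, vscale; simpl; field; lra).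
  rewrite wnorm by auto. replace (trace Q) with (s*s - 1) by lra. field. lra.
Qed.

Lemma edot_bound Q Om s : in_SO3 Q -> 0 < s -> s*s = 1 + trace Q ->
  4 * norm2 (edotv Q Om s) <= norm2 Om.
Proof.
  intros HS Hs Hss.
  set (t := trace Q) in *.
  set (w := wv Q).
  set (z := fun i => (1+t) * Om i + cross w Om i).
  assert (Hid : forall i, (i<3)%nat -> 4*(s*s*s) * edotv Q Om s i = (1+t) * z i).
  { intros i Hi.
    assert (E1 : 4*(s*s*s) * edotv Q Om s i
              = 2*(1+t) * wv (mm Q (hat Om)) i + w i * dot w Om).
    { unfold edotv. rewrite wOm. fold w. rewrite <- Hss. field. lra. }
    rewrite E1.
    pose proof (Kent Q HS) as K. fold w t in K.
    assert (K0 : Om n0 * (w i * w n0 - (1 + t) * ((1 - t) * idm i n0 + 2 * Q i n0 - hat w i n0)) = 0)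
      by (rewrite K by lia; ring).
    assert (K1 : Om n1 * (w i * w n1 - (1 + t) * ((1 - t) * idm i n1 + 2 * Q i n1 - hat w i n1)) = 0)
      by (rewrite K by lia; ring).
    assert (K2 : Om n2 * (w i * w n2 - (1 + t) * ((1 - t) * idm i n2 + 2 * Q i n2 - hat w i n2)) = 0)
      by (rewrite K by lia; ring).
    unfold z. unfold t, w in *.
    destruct i as [|[|[|i]]]; try lia;
    unfold dot, cross, wv, vee, msub, transp, mm, hat, idm, trace in *; simpl in *; lra. }
  assert (Hz : norm2 z <= 4*(1+t) * norm2 Om).
  { assert (E : norm2 z = (1+t)*(1+t)*norm2 Om + (norm2 w * norm2 Om - dot w Om * dot w Om))
      by (unfold z, norm2, dot, cross; simpl; ring).
    rewrite E. unfold w. rewrite wnorm by auto. fold t.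
    pose proof (sq0 (dot (wv Q) Om)). pose proof (norm2_nonneg Om).
    assert (0 <= 1 + t) by (unfold t; pose proof (tr_ge Q HS); lra).
    nra. }
  assert (Hs3 : 0 < s*s*s) by (apply Rmult_lt_0_compat; [apply Rmult_lt_0_compat|]; auto).
  assert (E2 : 16*(s*s*s)*(s*s*s) * norm2 (edotv Q Om s) = (1+t)*(1+t)*norm2 z).
  { unfold norm2, dot.
    replace (16 * (s * s * s) * (s * s * s) * (edotv Q Om s n0 * edotv Q Om s n0 + edotv Q Om s n1 * edotv Q Om s n1 + edotv Q Om s n2 * edotv Q Om s n2))
     with ((4*(s*s*s) * edotv Q Om s n0)*(4*(s*s*s) * edotv Q Om s n0)
          + (4*(s*s*s) * edotv Q Om s n1)*(4*(s*s*s) * edotv Q Om s n1)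
          + (4*(s*s*s) * edotv Q Om s n2)*(4*(s*s*s) * edotv Q Om s n2)) by ring.
    rewrite !Hid by lia. ring. }
  assert (E3 : (1+t)*(1+t)*(4*(1+t)) = 4*((s*s*s)*(s*s*s))) by (rewrite <- Hss; ring).
  assert (H16 : 16*(s*s*s)*(s*s*s) * norm2 (edotv Q Om s) <= 4*((s*s*s)*(s*s*s)) * norm2 Om).
  { rewrite E2.
    assert (X: (1+t)*(1+t)*norm2 z <= (1+t)*(1+t)*(4*(1+t)*norm2 Om))
      by (apply Rmult_le_compat_l; [apply sq0|auto]).
    replace (4*((s*s*s)*(s*s*s))*norm2 Om) with ((1+t)*(1+t)*(4*(1+t)*norm2 Om))
      by (rewrite <- E3; ring). auto. }
  assert (0 < (s*s*s)*(s*s*s)) by (apply Rmult_lt_0_compat; auto).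
  nra.
Qed.

Lemma D_plus f g t a b : derivable_pt_lim f t a -> derivable_pt_lim g t b ->
  derivable_pt_lim (fun s => f s + g s) t (a + b).
Proof. intros. exact (derivable_pt_lim_plus f g t a b H H0). Qed.
Lemma D_minus f g t a b : derivable_pt_lim f t a -> derivable_pt_lim g t b ->
  derivable_pt_lim (fun s => f s - g s) t (a - b).
Proof. intros. exact (derivable_pt_lim_minus f g t a b H H0). Qed.
Lemma D_mult f g t a b : derivable_pt_lim f t a -> derivable_pt_lim g t b ->
  derivable_pt_lim (fun s => f s * g s) t (a * g t + f t * b).
Proof. intros. exact (derivable_pt_lim_mult f g t a b H H0). Qed.
Lemma D_opp f t a : derivable_pt_lim f t a -> derivable_pt_lim (fun s => - f s) t (- a).
Proof. intros. exact (derivable_pt_lim_opp f t a H). Qed.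
Lemma D_const (c t : R) : derivable_pt_lim (fun _ => c) t 0.
Proof. exact (derivable_pt_lim_const c t). Qed.
Lemma D_id t : derivable_pt_lim (fun s => s) t 1.
Proof. exact (derivable_pt_lim_id t). Qed.
Lemma D_sqrt f t a : derivable_pt_lim f t a -> 0 < f t ->
  derivable_pt_lim (fun s => sqrt (f s)) t (/ (2 * sqrt (f t)) * a).
Proof.
  intros H Hp. apply (derivable_pt_lim_comp f sqrt t a (/ (2 * sqrt (f t)))); auto.
  apply derivable_pt_lim_sqrt; auto.
Qed.
Lemma D_exp f t a : derivable_pt_lim f t a ->
  derivable_pt_lim (fun s => exp (f s)) t (exp (f t) * a).
Proof.
  intros H. apply (derivable_pt_lim_comp f exp t a (exp (f t))); auto.
  apply derivable_pt_lim_exp.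
Qed.
Lemma D_inv f t a : derivable_pt_lim f t a -> f t <> 0 ->
  derivable_pt_lim (fun s => / f s) t (- a / (f t * f t)).
Proof.
  intros H Hn. pose (pr := exist (fun l => derivable_pt_lim f t l) a H : derivable_pt f t).
  apply (derive_pt_eq_1 (/ f)%F t _ (derivable_pt_inv f t Hn pr)).
  rewrite derive_pt_inv. unfold Rsqr. reflexivity.
Qed.
Lemma D_eq f t a b : derivable_pt_lim f t a -> a = b -> derivable_pt_lim f t b.
Proof. intros; subst; auto. Qed.

Ltac dtac_leaf := fail.

Ltac dtac :=
  match goal with
  | |- derivable_pt_lim (fun s => ?c) _ _ => apply D_const
  | |- derivable_pt_lim (fun s => s) _ _ => apply D_id
  | |- derivable_pt_lim (fun s => @?f s + @?g s) _ _ => apply (D_plus f g); dtac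
  | |- derivable_pt_lim (fun s => @?f s - @?g s) _ _ => apply (D_minus f g); dtac
  | |- derivable_pt_lim (fun s => @?f s * @?g s) _ _ => apply (D_mult f g); dtac
  | |- derivable_pt_lim (fun s => - @?f s) _ _ => apply (D_opp f); dtac
  | |- derivable_pt_lim (fun s => / @?f s) _ _ => apply (D_inv f); [dtac|]
  | |- derivable_pt_lim (fun s => @?f s / @?g s) _ _ =>
       apply (D_mult f (fun s => / g s)); [dtac | apply (D_inv g); [dtac|]]
  | |- derivable_pt_lim (fun s => sqrt (@?f s)) _ _ => apply (D_sqrt f); [dtac|]
  | |- derivable_pt_lim (fun s => exp (@?f s)) _ _ => apply (D_exp f); dtac
  | _ => dtac_leaf
  end.

Definition cat (f : R -> R) (t : R) := limit1_in f (fun s => 0 <= s) (f t) t.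

Lemma C_plus f g t : cat f t -> cat g t -> cat (fun s => f s + g s) t.
Proof. intros. apply limit_plus; auto. Qed.
Lemma C_minus f g t : cat f t -> cat g t -> cat (fun s => f s - g s) t.
Proof. intros. apply limit_minus; auto. Qed.
Lemma C_mult f g t : cat f t -> cat g t -> cat (fun s => f s * g s) t.
Proof. intros. apply limit_mul; auto. Qed.
Lemma C_opp f t : cat f t -> cat (fun s => - f s) t.
Proof. intros. apply limit_Ropp; auto. Qed.
Lemma C_const (c t : R) : cat (fun _ => c) t.
Proof. unfold cat. exact (limit_free (fun _ => c) _ 0 t). Qed.
Lemma C_id t : cat (fun s => s) t.
Proof. unfold cat. apply lim_x. Qed.
Lemma C_inv f t : cat f t -> f t <> 0 -> cat (fun s => / f s) t.
Proof. intros. apply limit_inv; auto. Qed.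
Lemma C_comp f g t : cat f t -> continuity_pt g (f t) -> cat (fun s => g (f s)) t.
Proof.
  intros Hf Hg eps Heps.
  destruct (Hg eps Heps) as [a [Ha Hg']].
  destruct (Hf a Ha) as [b [Hb Hf']].
  exists b. split; auto. intros x [Dx dx].
  destruct (Req_dec (f x) (f t)) as [E|E].
  - simpl. rewrite E. unfold Rdist. rewrite Rminus_diag, Rabs_R0. lra.
  - apply Hg'. split; [split; [constructor|auto]|]. apply Hf'. auto.
Qed.
Lemma C_sqrt f t : cat f t -> 0 <= f t -> cat (fun s => sqrt (f s)) t.
Proof. intros. apply (C_comp f sqrt); auto. apply continuity_pt_sqrt; auto. Qed.
Lemma C_exp f t : cat f t -> cat (fun s => exp (f s)) t.
Proof. intros. apply (C_comp f exp); auto. apply derivable_continuous_pt. apply derivable_pt_exp. Qed.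
Lemma C_div f g t : cat f t -> cat g t -> g t <> 0 -> cat (fun s => f s / g s) t.
Proof. intros. apply (C_mult f (fun s => / g s)); auto. apply C_inv; auto. Qed.

Ltac ctac_leaf := fail.
Ltac ctac :=
  match goal with
  | |- cat (fun s => ?c) _ => apply C_const
  | |- cat (fun s => s) _ => apply C_id
  | |- cat (fun s => @?f s + @?g s) _ => apply (C_plus f g); ctac
  | |- cat (fun s => @?f s - @?g s) _ => apply (C_minus f g); ctac
  | |- cat (fun s => @?f s * @?g s) _ => apply (C_mult f g); ctac
  | |- cat (fun s => - @?f s) _ => apply (C_opp f); ctac
  | |- cat (fun s => / @?f s) _ => apply (C_inv f); [ctac|]
  | |- cat (fun s => @?f s / @?g s) _ => apply (C_div f g); [ctac|ctac|]
  | |- cat (fun s => sqrt (@?f s)) _ => apply (C_sqrt f); [ctac|]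
  | |- cat (fun s => exp (@?f s)) _ => apply (C_exp f); ctac
  | _ => ctac_leaf
  end.

Lemma cat_of_cont f t : 0 <= t -> cont_nonneg f -> cat f t.
Proof.
  intros Ht Hc eps Heps. destruct (Hc t Ht eps Heps) as [d [Hd H]].
  exists d. split; auto. intros x [Dx dx]. apply H; auto.
Qed.

Lemma mono (f f' : R -> R) (y : R) : 0 <= y -> cat f 0 ->
  (forall c, 0 < c <= y -> derivable_pt_lim f c (f' c)) ->
  (forall c, 0 < c <= y -> f' c <= 0) -> f y <= f 0.
Proof.
  intros Hy Hc Hd Hn.
  destruct (Req_dec y 0) as [Z|Z]; [subst; lra|].
  assert (Step : forall e, 0 < e < y -> f y <= f e).
  { intros e He. destruct (MVT_cor2 f f' e y) as [c [Hc1 Hc2]]; [lra| |].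
    - intros c Hc'. apply Hd. lra.
    - assert (f' c * (y - e) <= 0).
      { assert (f' c <= 0) by (apply Hn; lra). assert (0 < y - e) by lra. nra. }
      lra. }
  apply Rnot_lt_le. intros Hlt.
  destruct (Hc (f y - f 0) ltac:(lra)) as [d [Hd0 Hd']].
  set (e := Rmin (d/2) (y/2)).
  assert (He : 0 < e < y).
  { unfold e. split. apply Rmin_pos; lra. pose proof (Rmin_r (d/2) (y/2)). lra. }
  assert (Hed : e < d) by (unfold e; pose proof (Rmin_l (d/2) (y/2)); lra).
  specialize (Hd' e). simpl in Hd'. unfold Rdist in Hd'.
  assert (Rabs (f e - f 0) < f y - f 0).
  { apply Hd'. split; [lra|]. rewrite Rminus_0_r, Rabs_right by lra. lra. }
  pose proof (Rle_abs (f e - f 0)). pose proof (Step e He). lra.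
Qed.

Lemma cat_use f t eps : cat f t -> eps > 0 ->
  exists a, a > 0 /\ forall y, 0 <= y -> Rabs (y - t) < a -> Rabs (f y - f t) < eps.
Proof.
  intros H He. destruct (H eps He) as [a [Ha H']]. exists a. split; auto.
  intros y Hy Hyt. apply (H' y). split; auto.
Qed.

Lemma continuation (s V V' : R -> R) (k d : R) :
  0 < k -> 0 < d ->
  (forall t, 0 <= t -> cat s t) ->
  cat V 0 ->
  (forall t, 0 <= t -> k * (2 - s t) <= V t) ->
  V 0 <= k * (2 - d) ->
  (forall c, 0 < c -> s c > 0 -> derivable_pt_lim V c (V' c)) ->
  (forall c, 0 < c -> s c > 0 -> V' c <= 0) ->
  forall t, 0 <= t -> d <= s t.
Proof.
  intros Hk Hd Hcs HcV Hlow HV0 HD HD' t1 Ht1.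
  assert (Hs0 : d <= s 0).
  { pose proof (Hlow 0 ltac:(lra)). 
    assert (k * (2 - s 0) <= k * (2 - d)) by lra.
    apply Rmult_le_reg_l in H0; lra. }
  apply Rnot_lt_le. intros Hlt.
  set (B := fun x => 0 <= x <= t1 /\ forall y, 0 <= y <= x -> s y > d/2).
  assert (HB0 : B 0).
  { split; [lra|]. intros y Hy. assert (y = 0) by lra. subst. lra. }
  assert (Hbd : bound B) by (exists t1; intros x [Hx _]; lra).
  destruct (completeness B Hbd (ex_intro _ 0 HB0)) as [T [HTub HTl]].
  assert (HT0 : 0 <= T) by (apply HTub; auto).
  assert (HTt1 : T <= t1) by (apply HTl; intros x [Hx _]; lra).
  assert (P : forall y, 0 <= y < T -> s y > d/2).
  { intros y Hy. destruct (classic (exists x, B x /\ y < x)) as [[x [[Hx1 Hx2] Hyx]]|N].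
    - apply Hx2. lra.
    - exfalso. assert (T <= y).
      { apply HTl. intros x Hx. destruct (Rle_or_lt x y); auto. exfalso; apply N; eauto. }
      lra. }
  assert (Q : forall y, 0 <= y < T -> d <= s y).
  { intros y Hy.
    assert (V y <= V 0).
    { apply (mono V V' y); try lra; auto.
      - intros c Hc. apply HD; [lra|]. pose proof (P c ltac:(lra)). lra.
      - intros c Hc. apply HD'; [lra|]. pose proof (P c ltac:(lra)). lra. }
    pose proof (Hlow y ltac:(lra)).
    assert (k * (2 - s y) <= k * (2 - d)) by lra.
    apply Rmult_le_reg_l in H1; lra. }
  assert (HsT : d <= s T).
  { destruct (Req_dec T 0) as [Z|Z]; [rewrite Z; auto|].
    apply Rnot_lt_le. intros HsTlt.
    destruct (cat_use s T (d - s T) (Hcs T HT0) ltac:(lra)) as [a [Ha Ha']].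
    set (y := Rmax 0 (T - a/2)).
    assert (Hy0 : 0 <= y) by (apply Rmax_l).
    assert (HyT : y < T) by (unfold y; apply Rmax_lub_lt; lra).
    assert (Hya : Rabs (y - T) < a).
    { rewrite Rabs_left by lra. unfold y. pose proof (Rmax_r 0 (T - a/2)). lra. }
    specialize (Ha' y Hy0 Hya). pose proof (Q y ltac:(lra)).
    pose proof (Rle_abs (s y - s T)). lra. }
  assert (HTlt : T < t1) by (destruct (Req_dec T t1) as [E|E]; [subst; lra|lra]).
  destruct (cat_use s T (s T - d/2) (Hcs T HT0) ltac:(lra)) as [a [Ha Ha']].
  set (x := Rmin (T + a/2) t1).
  assert (HxT : T < x) by (unfold x; apply Rmin_glb_lt; lra).
  assert (HBx : B x).
  { split. split; [lra|apply Rmin_r].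
    intros y Hy. destruct (Rlt_or_le y T) as [Hy'|Hy'].
    - apply P; lra.
    - assert (Rabs (y - T) < a).
      { rewrite Rabs_right by lra. pose proof (Rmin_l (T + a/2) t1). unfold x in Hy. lra. }
      specialize (Ha' y ltac:(lra) H).
      pose proof (Rle_abs (- (s y - s T))). rewrite Rabs_Ropp in H0. lra. }
  pose proof (HTub x HBx). lra.
Qed.

Ltac spec9 H := 
  pose proof (H n0 n0 ltac:(lia) ltac:(lia)); pose proof (H n0 n1 ltac:(lia) ltac:(lia));
  pose proof (H n0 n2 ltac:(lia) ltac:(lia)); pose proof (H n1 n0 ltac:(lia) ltac:(lia));
  pose proof (H n1 n1 ltac:(lia) ltac:(lia)); pose proof (H n1 n2 ltac:(lia) ltac:(lia));
  pose proof (H n2 n0 ltac:(lia) ltac:(lia)); pose proof (H n2 n1 ltac:(lia) ltac:(lia));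
  pose proof (H n2 n2 ltac:(lia) ltac:(lia)).
Ltac spec3 H := 
  pose proof (H n0 ltac:(lia)); pose proof (H n1 ltac:(lia)); pose proof (H n2 ltac:(lia)).

Ltac dtac_leaf ::= eassumption.
Ltac ctac_leaf ::= eassumption.

Definition Qm (Rd : mat) (Rt : R -> mat) (s : R) : mat := mm (transp Rd) (Rt s).

Lemma dQm J kR kOm Rd Rt Om dOm : closed_loop_solution J kR kOm Rd Rt Om dOm ->
  forall t, t > 0 -> forall i j, (i<3)%nat -> (j<3)%nat ->
  derivable_pt_lim (fun s => Qm Rd Rt s i j) t (mm (Qm Rd Rt t) (hat (Om t)) i j).
Proof.
  intros [_ [_ HD]] t Ht i j Hi Hj. destruct (HD t Ht) as [HR _].
  pose proof (fun k => HR k j) as HRj.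
  pose proof (HRj n0 ltac:(lia) Hj). pose proof (HRj n1 ltac:(lia) Hj). pose proof (HRj n2 ltac:(lia) Hj).
  unfold Qm. unfold mm at 1. unfold transp.
  eapply D_eq. dtac.
  unfold mm. ring.
Qed.

Lemma cQm J kR kOm Rd Rt Om dOm : closed_loop_solution J kR kOm Rd Rt Om dOm ->
  forall t, 0 <= t -> forall i j, (i<3)%nat -> (j<3)%nat -> cat (fun s => Qm Rd Rt s i j) t.
Proof.
  intros [HC _] t Ht i j Hi Hj.
  pose proof (fun k Hk => cat_of_cont _ t Ht (HC k j Hk Hj)) as HRj.
  spec3 HRj.
  unfold Qm, mm, transp. ctac.
Qed.

Lemma cOm J kR kOm Rd Rt Om dOm : closed_loop_solution J kR kOm Rd Rt Om dOm ->
  forall t, 0 <= t -> forall i, (i<3)%nat -> cat (fun s => Om s i) t.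
Proof. intros [_ [HC _]] t Ht i Hi. apply cat_of_cont; auto. Qed.

Lemma dOmi J kR kOm Rd Rt Om dOm : closed_loop_solution J kR kOm Rd Rt Om dOm ->
  forall t, t > 0 -> forall i, (i<3)%nat -> derivable_pt_lim (fun s => Om s i) t (dOm t i).
Proof. intros [_ [_ HD]] t Ht i Hi. destruct (HD t Ht) as [_ [H _]]. auto. Qed.

Lemma const_of (f : R -> R) y : 0 <= y -> cat f 0 ->
  (forall c, 0 < c <= y -> derivable_pt_lim f c 0) -> f y = f 0.
Proof.
  intros Hy Hc Hd.
  pose proof (mono f (fun _ => 0) y Hy Hc Hd ltac:(intros; lra)).
  pose proof (mono (fun s => - f s) (fun _ => 0) y Hy (C_opp f 0 Hc)
    ltac:(intros c Hc'; replace 0 with (-0) by ring; apply D_opp; auto) ltac:(intros; lra)).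
  simpl in *. lra.
Qed.

Lemma mm_ext_l A A' B i j : (forall k, (k<3)%nat -> A i k = A' i k) -> mm A B i j = mm A' B i j.
Proof. intros H. unfold mm. rewrite !H by lia. reflexivity. Qed.

Lemma det_mm A B : det3 (mm A B) = det3 A * det3 B.
Proof. unfold det3, mm. ring. Qed.
Lemma det_tr A : det3 (transp A) = det3 A.
Proof. unfold det3, transp. ring. Qed.

Lemma Q0_SO3 Rd R0 : in_SO3 Rd -> in_SO3 R0 -> in_SO3 (mm (transp Rd) R0).
Proof.
  intros [HOd Hdd] [HO0 Hd0]. split.
  - pose proof (orth_lr Rd HOd) as HP.
    intros i j Hi Hj.
    assert (E : mm (transp (mm (transp Rd) R0)) (mm (transp Rd) R0) i j
              = mm (mm (transp R0) (mm Rd (transp Rd))) R0 i j) by (unfold mm, transp; ring).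
    rewrite E. rewrite (mm_ext_l _ (transp R0)).
    + apply HO0; auto.
    + intros k Hk. apply mm_idm_r; auto.
  - rewrite det_mm, det_tr, Hdd, Hd0. ring.
Qed.

Lemma Q_SO3 J kR kOm Rd Rt Om dOm : in_SO3 Rd -> in_SO3 (Rt 0) ->
  closed_loop_solution J kR kOm Rd Rt Om dOm ->
  forall t, 0 <= t -> in_SO3 (Qm Rd Rt t).
Proof.
  intros HRd HR0 HCL t Ht.
  pose proof (Q0_SO3 Rd (Rt 0) HRd HR0) as [HO0 Hd0].
  pose proof (orth_lr _ HO0) as HP0.
  assert (HP : mat_eq (mm (Qm Rd Rt t) (transp (Qm Rd Rt t))) idm).
  { intros i j Hi Hj. rewrite <- (HP0 i j Hi Hj).
    change (mm (Qm Rd Rt t) (transp (Qm Rd Rt t)) i j = mm (Qm Rd Rt 0) (transp (Qm Rd Rt 0)) i j).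
    apply (const_of (fun s => mm (Qm Rd Rt s) (transp (Qm Rd Rt s)) i j) t Ht).
    - pose proof (cQm _ _ _ _ _ _ _ HCL 0 ltac:(lra)) as HC.
      pose proof (HC i n0 Hi ltac:(lia)); pose proof (HC i n1 Hi ltac:(lia)); pose proof (HC i n2 Hi ltac:(lia)).
      pose proof (HC j n0 Hj ltac:(lia)); pose proof (HC j n1 Hj ltac:(lia)); pose proof (HC j n2 Hj ltac:(lia)).
      unfold mm at 1, transp. ctac.
    - intros c Hc. pose proof (dQm _ _ _ _ _ _ _ HCL c ltac:(lra)) as HD.
      pose proof (HD i n0 Hi ltac:(lia)); pose proof (HD i n1 Hi ltac:(lia)); pose proof (HD i n2 Hi ltac:(lia)).
      pose proof (HD j n0 Hj ltac:(lia)); pose proof (HD j n1 Hj ltac:(lia)); pose proof (HD j n2 Hj ltac:(lia)).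
      unfold mm at 1, transp. eapply D_eq. dtac.
      unfold mm, hat; simpl. ring. }
  split.
  - apply (orth_lr (transp (Qm Rd Rt t))). exact HP.
  - rewrite <- Hd0.
    apply (const_of (fun s => det3 (Qm Rd Rt s)) t Ht).
    + pose proof (cQm _ _ _ _ _ _ _ HCL 0 ltac:(lra)) as HC. spec9 HC.
      unfold det3. ctac.
    + intros c Hc. pose proof (dQm _ _ _ _ _ _ _ HCL c ltac:(lra)) as HD. spec9 HD.
      unfold det3. eapply D_eq. dtac.
      unfold mm, hat; simpl. ring.
Qed.

Definition sfun Rd Rt s := sqrt (1 + trace (Qm Rd Rt s)).
Definition eRv Rd Rt s : vec := vscale (1 / (2 * sfun Rd Rt s)) (wv (Qm Rd Rt s)).
Definition Ef J (Om : R -> vec) s := dot (Om s) (mv J (Om s)) / 2.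
Definition Wf J Rd Rt (Om : R -> vec) s := dot (eRv Rd Rt s) (mv J (Om s)).

Lemma sqrt_pos_inv x : 0 < sqrt x -> 0 < x.
Proof. intros H. destruct (Rle_or_lt x 0) as [H'|H']; auto. rewrite sqrt_neg_0 in H; lra. Qed.

Ltac side := cbv beta; first [lra | (intro; lra)].

Lemma d_sfun J kR kOm Rd Rt Om dOm : closed_loop_solution J kR kOm Rd Rt Om dOm ->
  forall c, c > 0 -> sfun Rd Rt c > 0 ->
  derivable_pt_lim (fun s => sfun Rd Rt s) c (- dot (eRv Rd Rt c) (Om c)).
Proof.
  intros HCL c Hc Hs. pose proof (sqrt_pos_inv _ Hs) as Hp. unfold sfun, trace in *.
  pose proof (dQm _ _ _ _ _ _ _ HCL c Hc) as HD. spec9 HD.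
  eapply D_eq. { dtac. all: side. }
  unfold eRv, sfun, dot, vscale, wv, vee, msub, transp, mm, hat, trace; simpl.
  set (s := sqrt _) in *. field. lra.
Qed.

Lemma d_eR J kR kOm Rd Rt Om dOm : closed_loop_solution J kR kOm Rd Rt Om dOm ->
  forall c, c > 0 -> sfun Rd Rt c > 0 -> forall i, (i<3)%nat ->
  derivable_pt_lim (fun s => eRv Rd Rt s i) c (edotv (Qm Rd Rt c) (Om c) (sfun Rd Rt c) i).
Proof.
  intros HCL c Hc Hs i Hi. pose proof (sqrt_pos_inv _ Hs) as Hp. unfold sfun, trace in *.
  pose proof (dQm _ _ _ _ _ _ _ HCL c Hc) as HD. spec9 HD.
  destruct i as [|[|[|i]]]; try lia;
  unfold eRv, vscale, wv, vee, msub, transp, sfun, trace; simpl;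
  (eapply D_eq; [ dtac; side | ]);
  unfold edotv, wv, vee, msub, transp, mm, hat, trace; simpl;
  set (s := sqrt _) in *; field; lra.
Qed.

Lemma d_Ef J kR kOm Rd Rt Om dOm : sym_pos_def J -> closed_loop_solution J kR kOm Rd Rt Om dOm ->
  forall c, c > 0 -> derivable_pt_lim (fun s => Ef J Om s) c (dot (Om c) (mv J (dOm c))).
Proof.
  intros HJ HCL c Hc. pose proof (dOmi _ _ _ _ _ _ _ HCL c Hc) as HD. spec3 HD.
  destruct (symJ J HJ) as [S1 [S2 S3]].
  unfold Ef, dot, mv. eapply D_eq. { dtac. all: side. }
  rewrite <- S1, <- S2, <- S3. field.
Qed.

Lemma d_Wf J kR kOm Rd Rt Om dOm : closed_loop_solution J kR kOm Rd Rt Om dOm ->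
  forall c, c > 0 -> sfun Rd Rt c > 0 ->
  derivable_pt_lim (fun s => Wf J Rd Rt Om s) c
    (dot (edotv (Qm Rd Rt c) (Om c) (sfun Rd Rt c)) (mv J (Om c)) + dot (eRv Rd Rt c) (mv J (dOm c))).
Proof.
  intros HCL c Hc Hs. pose proof (dOmi _ _ _ _ _ _ _ HCL c Hc) as HD. spec3 HD.
  pose proof (d_eR _ _ _ _ _ _ _ HCL c Hc Hs) as HE. spec3 HE.
  unfold Wf, dot, mv. eapply D_eq. { dtac. }
  ring.
Qed.

Lemma c_sfun J kR kOm Rd Rt Om dOm : in_SO3 Rd -> in_SO3 (Rt 0) ->
  closed_loop_solution J kR kOm Rd Rt Om dOm ->
  forall t, 0 <= t -> cat (fun s => sfun Rd Rt s) t.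
Proof.
  intros HRd HR0 HCL t Ht. pose proof (tr_ge _ (Q_SO3 _ _ _ _ _ _ _ HRd HR0 HCL t Ht)).
  pose proof (cQm _ _ _ _ _ _ _ HCL t Ht) as HC. spec9 HC.
  unfold sfun, trace in *. ctac. side.
Qed.

Lemma c_Ef J kR kOm Rd Rt Om dOm : closed_loop_solution J kR kOm Rd Rt Om dOm ->
  forall t, 0 <= t -> cat (fun s => Ef J Om s) t.
Proof.
  intros HCL t Ht. pose proof (cOm _ _ _ _ _ _ _ HCL t Ht) as HC. spec3 HC.
  unfold Ef, dot, mv. ctac. side.
Qed.

Lemma c_Wf J kR kOm Rd Rt Om dOm : in_SO3 Rd -> in_SO3 (Rt 0) ->
  closed_loop_solution J kR kOm Rd Rt Om dOm ->
  forall t, 0 <= t -> sfun Rd Rt t > 0 -> cat (fun s => Wf J Rd Rt Om s) t.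
Proof.
  intros HRd HR0 HCL t Ht Hs. pose proof (sqrt_pos_inv _ Hs) as Hp.
  pose proof (cOm _ _ _ _ _ _ _ HCL t Ht) as HC. spec3 HC.
  pose proof (cQm _ _ _ _ _ _ _ HCL t Ht) as HQ. spec9 HQ.
  unfold sfun, trace in *.
  unfold Wf, dot, mv, eRv, vscale, wv, vee, msub, transp, sfun, trace. simpl.
  ctac; side.
Qed.

Lemma Jcs J : symm J -> (forall x, 0 <= dot x (mv J x)) -> forall a b,
  2 * dot a (mv J b) <= dot a (mv J a) + dot b (mv J b) /\
  - (2 * dot a (mv J b)) <= dot a (mv J a) + dot b (mv J b).
Proof.
  intros [S1 [S2 S3]] HP a b.
  pose proof (HP (vsub a b)) as H1. pose proof (HP (vadd a b)) as H2.
  assert (E1 : dot (vsub a b) (mv J (vsub a b)) = dot a (mv J a) + dot b (mv J b) - 2 * dot a (mv J b)).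
  { unfold dot, mv, vsub. rewrite <- S1, <- S2, <- S3. ring. }
  assert (E2 : dot (vadd a b) (mv J (vadd a b)) = dot a (mv J a) + dot b (mv J b) + 2 * dot a (mv J b)).
  { unfold dot, mv, vadd. rewrite <- S1, <- S2, <- S3. ring. }
  lra.
Qed.

Lemma lagrange e o : norm2 (cross e o) = norm2 e * norm2 o - dot e o * dot e o.
Proof. unfold norm2, dot, cross; simpl; ring. Qed.

Lemma Vd_bound J L kR kOm c (o e ed jd : vec) :
  symm J -> (forall x, 0 <= dot x (mv J x)) -> (forall x, dot x (mv J x) <= L * norm2 x) ->
  0 < L -> 0 < kR -> 0 < kOm -> 0 < c ->
  c * (13*L/8 + kOm*kOm/(2*kR)) <= kOm/2 ->
  norm2 e <= 1 -> 4 * norm2 ed <= norm2 o ->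
  (forall i, (i<3)%nat -> jd i = - kR * e i - kOm * o i - cross o (mv J o) i) ->
  dot o jd + kR * dot e o + c * (dot ed (mv J o) + dot e jd)
    <= - (kOm/2) * norm2 o - (c*kR/2) * norm2 e.
Proof.
  intros HS HP Hup HL HkR HkO Hc HcA He1 Hed Hjd.
  assert (E1 : dot o jd = - kR * dot e o - kOm * norm2 o).
  { unfold dot at 1. rewrite !Hjd by lia. unfold norm2, dot, cross; simpl. ring. }
  assert (E2 : dot e jd = - kR * norm2 e - kOm * dot e o - dot (cross e o) (mv J o)).
  { unfold dot at 1. rewrite !Hjd by lia. unfold norm2, dot, cross; simpl. ring. }
  rewrite E1, E2.
  pose proof (Jcs J HS HP ed o) as [B1 _].
  pose proof (Jcs J HS HP (cross e o) o) as [_ B2].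
  pose proof (Hup ed). pose proof (Hup o). pose proof (Hup (cross e o)).
  pose proof (lagrange e o) as LG.
  pose proof (norm2_nonneg o). pose proof (norm2_nonneg e). pose proof (sq0 (dot e o)).
  assert (Hx : norm2 (cross e o) <= norm2 o).
  { rewrite LG. assert (norm2 e * norm2 o <= 1 * norm2 o) by (apply Rmult_le_compat_r; auto). lra. }
  assert (X1 : dot ed (mv J o) <= 5*L/8 * norm2 o).
  { assert (L * norm2 ed <= L * (norm2 o / 4)) by (apply Rmult_le_compat_l; lra). lra. }
  assert (X2 : - dot (cross e o) (mv J o) <= L * norm2 o).
  { assert (L * norm2 (cross e o) <= L * norm2 o) by (apply Rmult_le_compat_l; lra). lra. }
  assert (X3 : - kOm * dot e o <= kR/2 * norm2 e + kOm*kOm/(2*kR) * norm2 o).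
  { pose proof (norm2_nonneg (vadd (vscale kR e) (vscale kOm o))) as N.
    assert (EN : norm2 (vadd (vscale kR e) (vscale kOm o)) = kR*kR*norm2 e + 2*kR*kOm*dot e o + kOm*kOm*norm2 o)
      by (unfold norm2, dot, vadd, vscale; ring).
    apply (Rmult_le_reg_l (2*kR)); [lra|].
    replace (2*kR*(kR/2 * norm2 e + kOm*kOm/(2*kR) * norm2 o)) with (kR*kR*norm2 e + kOm*kOm*norm2 o)
      by (field; lra).
    lra. }
  assert (Y : c * (dot ed (mv J o) - kR * norm2 e - kOm * dot e o - dot (cross e o) (mv J o))
             <= c * ((13*L/8 + kOm*kOm/(2*kR)) * norm2 o - kR/2 * norm2 e)).
  { apply Rmult_le_compat_l; lra. }
  assert (Z : c * (13*L/8 + kOm*kOm/(2*kR)) * norm2 o <= kOm/2 * norm2 o)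
    by (apply Rmult_le_compat_r; auto).
  lra.
Qed.

Lemma Vf_bounds J L m kR c (o e : vec) s :
  symm J -> (forall x, m * norm2 x <= dot x (mv J x)) -> (forall x, dot x (mv J x) <= L * norm2 x) ->
  0 < L -> 0 < m -> 0 < kR -> 0 < c -> c <= 1/2 -> c * L <= kR ->
  (2 - s)/2 <= norm2 e -> norm2 e <= 2 - s ->
  let V := dot o (mv J o) / 2 + kR * (2 - s) + c * dot e (mv J o) in
  V <= (L + 3*kR) * (norm2 o + norm2 e) /\
  Rmin (m/4) (kR/2) * (norm2 o + norm2 e) <= V.
Proof.
  intros HS Hlo Hup HL Hm HkR Hc Hc2 HcL He1 He2 V.
  assert (HP : forall x, 0 <= dot x (mv J x)).
  { intros x. pose proof (Hlo x). pose proof (norm2_nonneg x). nra. }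
  pose proof (Jcs J HS HP e o) as [B1 B2].
  pose proof (Hup e). pose proof (Hup o). pose proof (Hlo o).
  pose proof (norm2_nonneg o). pose proof (norm2_nonneg e). pose proof (HP o). pose proof (HP e).
  assert (C1 : c * (2 * dot e (mv J o)) <= c * (dot e (mv J e) + dot o (mv J o))) by (apply Rmult_le_compat_l; lra).
  assert (C2 : c * (- (2 * dot e (mv J o))) <= c * (dot e (mv J e) + dot o (mv J o))) by (apply Rmult_le_compat_l; lra).
  assert (C3 : c * dot e (mv J e) <= c * (L * norm2 e)) by (apply Rmult_le_compat_l; lra).
  assert (C4 : c * dot o (mv J o) <= 1/2 * dot o (mv J o)) by (apply Rmult_le_compat_r; lra).
  assert (C5 : c * L * norm2 e <= kR * norm2 e) by (apply Rmult_le_compat_r; lra).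
  assert (C6 : c * L * norm2 o <= kR * norm2 o) by (apply Rmult_le_compat_r; lra).
  split.
  - unfold V. assert (c * (L * norm2 o) <= c * (L * norm2 o)) by lra. 
    assert (c * dot o (mv J o) <= c * (L * norm2 o)) by (apply Rmult_le_compat_l; lra).
    nra.
  - unfold V.
    assert (Rmin (m/4) (kR/2) * norm2 o <= m/4 * norm2 o) by (apply Rmult_le_compat_r; [lra|apply Rmin_l]).
    assert (Rmin (m/4) (kR/2) * norm2 e <= kR/2 * norm2 e) by (apply Rmult_le_compat_r; [lra|apply Rmin_r]).
    assert (m * norm2 o <= dot o (mv J o)) by auto.
    nra.
Qed.

Lemma eR_eq Rd Rt t i : e_R (Rt t) Rd i = eRv Rd Rt t i.
Proof.
  unfold e_R, eRv, wv, vscale, vee, msub, sfun, Qm, transp, mm, trace.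
  destruct i as [|[|i]]; simpl; ring.
Qed.

Lemma norm_eR Rd Rt t : norm2 (e_R (Rt t) Rd) = norm2 (eRv Rd Rt t).
Proof. unfold norm2, dot. rewrite !eR_eq. reflexivity. Qed.

Lemma norm_eOm Rd Rm (o : vec) : norm2 (e_Omega Rm Rd o vzero) = norm2 o.
Proof. unfold norm2, dot, e_Omega, vsub, mv, vzero. ring. Qed.

Lemma Jdom J kR kOm Rd Rt Om dOm : closed_loop_solution J kR kOm Rd Rt Om dOm ->
  forall c, c > 0 -> forall i, (i<3)%nat ->
  mv J (dOm c) i = - kR * eRv Rd Rt c i - kOm * Om c i - cross (Om c) (mv J (Om c)) i.
Proof.
  intros [_ [_ HD]] c Hc i Hi. destruct (HD c Hc) as [_ [_ HE]].
  specialize (HE i Hi). unfold vadd, control, e_Omega, vsub, vscale, vzero in HE.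
  rewrite eR_eq in HE. unfold mv in *. lra.
Qed.

Lemma sfun_le2 Rd Rt t : in_SO3 (Qm Rd Rt t) -> sfun Rd Rt t <= 2.
Proof.
  intros HS. pose proof (tr_le3 _ HS). unfold sfun.
  rewrite <- sqrt_square with (x := 2) by lra. apply sqrt_le_1_alt. lra.
Qed.

Lemma sfun_sq Rd Rt t : in_SO3 (Qm Rd Rt t) -> sfun Rd Rt t * sfun Rd Rt t = 1 + trace (Qm Rd Rt t).
Proof. intros HS. pose proof (tr_ge _ HS). unfold sfun. apply sqrt_sqrt. lra. Qed.

Theorem proposition4 :
  forall (J : mat) (lmax kR kOm : R),
    sym_pos_def J -> is_lambda_max J lmax -> kR > 0 -> kOm > 0 ->
    exists C beta : R, C > 0 /\ beta > 0 /\
      forall (Rd : mat) (Rt : R -> mat) (Om dOm : R -> vec),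
        in_SO3 Rd -> in_SO3 (Rt 0) ->
        closed_loop_solution J kR kOm Rd Rt Om dOm ->
        Psi (Rt 0) Rd < 2 ->
        norm2 (Om 0) < 2 * kR / lmax * (2 - Psi (Rt 0) Rd) ->
        (forall t, 0 <= t -> Psi (Rt t) Rd < 2) /\
        (forall t, 0 <= t ->
           norm2 (e_R (Rt t) Rd) + norm2 (e_Omega (Rt t) Rd (Om t) vzero)
           <= C * (norm2 (e_R (Rt 0) Rd) + norm2 (e_Omega (Rt 0) Rd (Om 0) vzero))
              * exp (- beta * t)).
Proof.
  intros J lmax kR kOm HJ Hl HkR HkO.
  pose proof (lmax_pos J lmax HJ Hl) as HL.
  destruct (J_lower J HJ) as [m [Hm Hlo]].
  pose proof (J_upper J lmax HJ Hl) as Hup.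
  pose proof (symJ J HJ) as HS.
  assert (HP : forall x, 0 <= dot x (mv J x)).
  { intros x. pose proof (Hlo x). pose proof (norm2_nonneg x). nra. }
  set (A := 13*lmax/8 + kOm*kOm/(2*kR)).
  assert (HA : 0 < A).
  { unfold A. assert (0 < kOm*kOm/(2*kR)) by (apply Rdiv_lt_0_compat; nra). lra. }
  set (c := Rmin (Rmin (1/2) (kR/lmax)) (kOm/(2*A))).
  assert (Hc : 0 < c).
  { unfold c. apply Rmin_pos; [apply Rmin_pos|]; try lra; apply Rdiv_lt_0_compat; lra. }
  assert (Hc1 : c <= 1/2) by (unfold c; pose proof (Rmin_l (Rmin (1/2) (kR/lmax)) (kOm/(2*A))); pose proof (Rmin_l (1/2) (kR/lmax)); lra).
  assert (Hc2 : c * lmax <= kR).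
  { assert (c <= kR/lmax) by (unfold c; pose proof (Rmin_l (Rmin (1/2) (kR/lmax)) (kOm/(2*A))); pose proof (Rmin_r (1/2) (kR/lmax)); lra).
    apply (Rmult_le_compat_r lmax) in H; [|lra]. unfold Rdiv in H. rewrite Rmult_assoc, Rinv_l in H by lra. lra. }
  assert (Hc3 : c * A <= kOm/2).
  { assert (c <= kOm/(2*A)) by (unfold c; apply Rmin_r).
    apply (Rmult_le_compat_r A) in H; [|lra]. replace (kOm/(2*A)*A) with (kOm/2) in H by (field; lra). lra. }
  set (b := Rmin (kOm/2) (c*kR/2)).
  assert (Hb : 0 < b) by (unfold b; apply Rmin_pos; nra).
  set (U := lmax + 3*kR).
  assert (HU : 0 < U) by (unfold U; lra).
  set (ell := Rmin (m/4) (kR/2)).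
  assert (Hell : 0 < ell) by (unfold ell; apply Rmin_pos; lra).
  set (alpha := b/U).
  assert (Halpha : 0 < alpha) by (unfold alpha; apply Rdiv_lt_0_compat; lra).
  exists (U/ell), alpha. split; [apply Rdiv_lt_0_compat; lra|]. split; [lra|].
  intros Rd Rt Om dOm HRd HR0 HCL HPsi0 HOm0.
  assert (HSO : forall t, 0 <= t -> in_SO3 (Qm Rd Rt t)) by (apply (Q_SO3 J kR kOm Rd Rt Om dOm); auto).
  assert (HPsi : forall t, Psi (Rt t) Rd = 2 - sfun Rd Rt t) by (intros; reflexivity).
  rewrite HPsi in HPsi0, HOm0.
  set (V1 := fun s => Ef J Om s + kR * (2 - sfun Rd Rt s)).
  assert (HE0 : Ef J Om 0 < kR * sfun Rd Rt 0).
  { unfold Ef. pose proof (Hup (Om 0)).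
    assert (lmax * norm2 (Om 0) < lmax * (2 * kR / lmax * (2 - (2 - sfun Rd Rt 0))))
      by (apply Rmult_lt_compat_l; auto).
    replace (lmax * (2 * kR / lmax * (2 - (2 - sfun Rd Rt 0)))) with (2 * kR * sfun Rd Rt 0) in H0
      by (field; lra). lra. }
  set (dl := 2 - V1 0 / kR).
  assert (Hdl : 0 < dl).
  { unfold dl, V1. apply (Rmult_lt_reg_l kR); [lra|].
    replace (kR * (2 - (Ef J Om 0 + kR * (2 - sfun Rd Rt 0)) / kR)) with (kR * sfun Rd Rt 0 - Ef J Om 0) by (field; lra).
    lra. }
  assert (Hsd : forall t, 0 <= t -> dl <= sfun Rd Rt t).
  { apply (continuation (fun s => sfun Rd Rt s) V1 (fun s => - kOm * norm2 (Om s)) kR dl); auto.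
    - intros t Ht. apply (c_sfun J kR kOm Rd Rt Om dOm); auto.
    - pose proof (c_Ef J kR kOm Rd Rt Om dOm HCL 0 ltac:(lra)).
      pose proof (c_sfun J kR kOm Rd Rt Om dOm HRd HR0 HCL 0 ltac:(lra)).
      unfold V1. ctac.
    - intros t Ht. unfold V1, Ef. pose proof (HP (Om t)). lra.
    - unfold dl. right. field. lra.
    - intros c0 Hc0 Hs0.
      pose proof (d_Ef J kR kOm Rd Rt Om dOm HJ HCL c0 Hc0).
      pose proof (d_sfun J kR kOm Rd Rt Om dOm HCL c0 Hc0 Hs0).
      unfold V1. eapply D_eq. { dtac. }
      assert (dot (Om c0) (mv J (dOm c0)) = - kR * dot (eRv Rd Rt c0) (Om c0) - kOm * norm2 (Om c0)).
      { unfold dot at 1. rewrite !(Jdom J kR kOm Rd Rt Om dOm HCL c0 Hc0) by lia.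
        unfold norm2, dot, cross; simpl. ring. }
      lra.
    - intros c0 Hc0 Hs0. pose proof (norm2_nonneg (Om c0)). nra. }
  split.
  { intros t Ht. rewrite HPsi. pose proof (Hsd t Ht). lra. }
  set (Vf := fun s => Ef J Om s + kR * (2 - sfun Rd Rt s) + c * Wf J Rd Rt Om s).
  set (Vd := fun s => dot (Om s) (mv J (dOm s)) - kR * (- dot (eRv Rd Rt s) (Om s))
      + c * (dot (edotv (Qm Rd Rt s) (Om s) (sfun Rd Rt s)) (mv J (Om s)) + dot (eRv Rd Rt s) (mv J (dOm s)))).
  assert (Hspos : forall t, 0 <= t -> sfun Rd Rt t > 0) by (intros t Ht; pose proof (Hsd t Ht); lra).
  assert (HVd : forall c0, c0 > 0 -> derivable_pt_lim Vf c0 (Vd c0)).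
  { intros c0 Hc0.
    pose proof (d_Ef J kR kOm Rd Rt Om dOm HJ HCL c0 Hc0).
    pose proof (d_sfun J kR kOm Rd Rt Om dOm HCL c0 Hc0 (Hspos c0 ltac:(lra))).
    pose proof (d_Wf J kR kOm Rd Rt Om dOm HCL c0 Hc0 (Hspos c0 ltac:(lra))).
    unfold Vf. eapply D_eq. { dtac. }
    unfold Vd. ring. }
  assert (Hest : forall t, 0 <= t ->
     let o := Om t in let e := eRv Rd Rt t in
     Vf t <= U * (norm2 o + norm2 e) /\ ell * (norm2 o + norm2 e) <= Vf t /\
     (t > 0 -> Vd t <= - b * (norm2 o + norm2 e))).
  { intros t Ht o e.
    pose proof (HSO t Ht) as HSt.
    pose proof (Hspos t Ht) as Hst.
    pose proof (sfun_le2 Rd Rt t HSt) as Hs2.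
    pose proof (sfun_sq Rd Rt t HSt) as Hsq.
    pose proof (enorm (Qm Rd Rt t) (sfun Rd Rt t) HSt Hst Hsq) as Hen.
    fold (eRv Rd Rt t) in Hen. fold e in Hen.
    assert (He1 : (2 - sfun Rd Rt t)/2 <= norm2 e /\ norm2 e <= 2 - sfun Rd Rt t /\ norm2 e <= 1).
    { rewrite Hen. nra. }
    destruct He1 as [He1 [He2 He3]].
    pose proof (Vf_bounds J lmax m kR c o e (sfun Rd Rt t) HS Hlo Hup HL Hm HkR Hc Hc1 Hc2 He1 He2) as VB.
    cbv zeta in VB. destruct VB as [VB1 VB2].
    assert (EV : Vf t = dot o (mv J o) / 2 + kR * (2 - sfun Rd Rt t) + c * dot e (mv J o)) by reflexivity.
    split; [rewrite EV; exact VB1|]. split; [rewrite EV; exact VB2|].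
    intros Htp.
    pose proof (edot_bound (Qm Rd Rt t) o (sfun Rd Rt t) HSt Hst Hsq) as Hed.
    pose proof (Vd_bound J lmax kR kOm c o e (edotv (Qm Rd Rt t) o (sfun Rd Rt t)) (mv J (dOm t))
      HS HP Hup HL HkR HkO Hc Hc3 He3 Hed
      (Jdom J kR kOm Rd Rt Om dOm HCL t Htp)) as VD.
    assert (EVd : Vd t = dot o (mv J (dOm t)) + kR * dot e o
        + c * (dot (edotv (Qm Rd Rt t) o (sfun Rd Rt t)) (mv J o) + dot e (mv J (dOm t))))
      by (unfold Vd; fold o e; ring).
    rewrite EVd.
    pose proof (norm2_nonneg o). pose proof (norm2_nonneg e).
    assert (b * norm2 o <= kOm/2 * norm2 o) by (apply Rmult_le_compat_r; [lra|apply Rmin_l]).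
    assert (b * norm2 e <= c*kR/2 * norm2 e) by (apply Rmult_le_compat_r; [lra|apply Rmin_r]).
    lra. }
  set (g := fun s => Vf s * exp (alpha * s)).
  assert (Hg : forall t, 0 <= t -> g t <= g 0).
  { intros t Ht.
    apply (mono g (fun s => (Vd s + alpha * Vf s) * exp (alpha * s)) t Ht).
    - assert (cat Vf 0).
      { pose proof (c_Ef J kR kOm Rd Rt Om dOm HCL 0 ltac:(lra)).
        pose proof (c_sfun J kR kOm Rd Rt Om dOm HRd HR0 HCL 0 ltac:(lra)).
        pose proof (c_Wf J kR kOm Rd Rt Om dOm HRd HR0 HCL 0 ltac:(lra) (Hspos 0 ltac:(lra))).
        unfold Vf. ctac. }
      unfold g. ctac.
    - intros c0 Hc0. pose proof (HVd c0 ltac:(lra)).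
      unfold g. eapply D_eq. { dtac. } ring.
    - intros c0 Hc0. destruct (Hest c0 ltac:(lra)) as [E1 [E2 E3]].
      specialize (E3 ltac:(lra)).
      assert (Vd c0 + alpha * Vf c0 <= 0).
      { assert (alpha * Vf c0 <= alpha * (U * (norm2 (Om c0) + norm2 (eRv Rd Rt c0))))
          by (apply Rmult_le_compat_l; lra).
        replace (alpha * (U * (norm2 (Om c0) + norm2 (eRv Rd Rt c0)))) with (b * (norm2 (Om c0) + norm2 (eRv Rd Rt c0))) in H
          by (unfold alpha; field; lra).
        lra. }
      pose proof (exp_pos (alpha * c0)). nra. }
  intros t Ht.
  rewrite !norm_eR, !norm_eOm.
  destruct (Hest t Ht) as [_ [L1 _]]. destruct (Hest 0 ltac:(lra)) as [U0 _].
  pose proof (Hg t Ht) as G. unfold g in G. rewrite Rmult_0_r, exp_0, Rmult_1_r in G.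
  assert (Hexp : exp (alpha * t) * exp (- alpha * t) = 1).
  { rewrite <- exp_plus. replace (alpha * t + - alpha * t) with 0 by ring. apply exp_0. }
  pose proof (exp_pos (- alpha * t)) as Hep. pose proof (exp_pos (alpha * t)).
  assert (Vf t <= Vf 0 * exp (- alpha * t)).
  { replace (Vf t) with (Vf t * exp (alpha * t) * exp (- alpha * t)) by (rewrite Rmult_assoc, Hexp; ring).
    apply Rmult_le_compat_r; lra. }
  assert (Vf 0 * exp (- alpha * t) <= U * (norm2 (Om 0) + norm2 (eRv Rd Rt 0)) * exp (- alpha * t))
    by (apply Rmult_le_compat_r; lra).
  apply (Rmult_le_reg_l ell); [lra|].
  replace (ell * (U / ell * (norm2 (eRv Rd Rt 0) + norm2 (Om 0)) * exp (- alpha * t)))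
    with (U * (norm2 (Om 0) + norm2 (eRv Rd Rt 0)) * exp (- alpha * t)) by (field; lra).
  lra.
Qed.
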